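(* Let $k\ge1$, let $(A,t)$ be a $\mathcal{C}_k$-algebra and $F\subseteq A$. Then $F$ is a cyclic deductive system of $A$ if and only if $F$ is a $c$-filter of $A$.
   Context: A modal pseudocomplemented De Morgan algebra ($mpM$-algebra) is an algebra $\langle A,\wedge,\vee,\sim,{}^\ast,0,1\rangle$ such that $\langle A,\wedge,\vee,\sim,0,1\rangle$ is a De Morgan algebra (bounded distributive lattice with $\sim\sim x=x$, $\sim(x\vee y)=\sim x\wedge\sim y$), $x^\ast$ is the pseudocomplement of $x$, and $x\vee\sim x\le x\vee x^\ast$. Put $\nabla x=\sim(\sim x\wedge x^\ast)$, $\triangle x=\sim\nabla\sim x$. A $\mathcal{C}_k$-algebra ($k\ge1$) is a pair $(A,t)$ with $A$ an $mpM$-algebra and $t$ an $mpM$-automorphism of $A$ with $t^k=\mathrm{id}$. The cyclic implication is $a\rightharpoondown b=\bigvee_{i=1}^{k}\nabla(\sim t^i(a))\vee b$. A cyclic deductive system is a set $D\subseteq A$ with $1\in D$ such that $x\in D$ and $x\rightharpoondown y\in D$ imply $y\in D$. A $c$-filter is a lattice filter $F$ of $A$ such that $x\in F$ implies $\triangle x\in F$ and $t(x)\in F$. *)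

(* Defs.v *)
From HB Require Import structures.
From mathcomp Require Import all_boot all_order.
Set Implicit Arguments. Unset Strict Implicit. Unset Printing Implicit Defensive.
Import Order.TTheory.
Local Open Scope order_scope.

(* An mpM-algebra: a bounded distributive lattice L (mathcomp
   tbDistrLatticeType, with meet `&`, join `|`, \bot = 0, \top = 1)
   together with a De Morgan negation [neg] (~) and a unary operation
   [star] (written x^* in the paper), which is the pseudocomplement, satisfying
   x \/ ~x <= x \/ x^*. *)
Section MPM.
Context {disp : Order.disp_t} {L : tbDistrLatticeType disp}.

Definition is_mpM (neg star : L -> L) : Prop :=
  [/\ (forall x, neg (neg x) = x),
      (forall x y, neg (x `|` y) = neg x `&` neg y),
      (forall x y, (x `&` y == \bot) = (y <= star x)) &
      (forall x, x `|` neg x <= x `|` star x)].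

Definition nabla (neg star : L -> L) (x : L) : L := neg (neg x `&` star x).
Definition delta (neg star : L -> L) (x : L) : L := neg (nabla neg star (neg x)).

Definition is_Ck_aut (neg star : L -> L) (k : nat) (t : L -> L) : Prop :=
  [/\ bijective t,
      (forall x y, t (x `&` y) = t x `&` t y),
      (forall x y, t (x `|` y) = t x `|` t y),
      (forall x, t (neg x) = neg (t x)) &
      (forall x, t (star x) = star (t x))] /\
  [/\ t \bot = \bot,
      t \top = \top &
      (forall x, iter k t x = x)].

Definition cimp (neg star : L -> L) (k : nat) (t : L -> L) (a b : L) : L :=
  (\join_(1 <= i < k.+1) nabla neg star (neg (iter i t a))) `|` b.

Definition cyclic_ds (neg star : L -> L) (k : nat) (t : L -> L) (D : L -> Prop) : Prop :=
  D \top /\ (forall x y, D x -> D (cimp neg star k t x y) -> D y).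

Definition lattice_filter (F : L -> Prop) : Prop :=
  [/\ F \top,
      (forall x y, F x -> x <= y -> F y) &
      (forall x y, F x -> F y -> F (x `&` y))].

Definition c_filter (neg star : L -> L) (t : L -> L) (F : L -> Prop) : Prop :=
  [/\ lattice_filter F,
      (forall x, F x -> F (delta neg star x)) &
      (forall x, F x -> F (t x))].
End MPM.

(* Main.v *)
Require Import Defs.
From mathcomp Require Import all_boot all_order.
Set Implicit Arguments. Unset Strict Implicit.
Import Order.TTheory.
Local Open Scope order_scope.

Section H.
Context {disp : Order.disp_t} {L : tbDistrLatticeType disp}.
Implicit Types x y z : L.

Lemma top_of_neg (neg : L -> L) (nK : forall x, neg (neg x) = x)
  (nU : forall x y, neg (x `|` y) = neg x `&` neg y) a :
  neg a = \bot -> a = \top.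
Proof.
move=> h.
have nb : neg \bot = \top.
  apply/eqP; rewrite -le1x.
  have : neg (neg \bot `|` \top) = neg (neg \bot) `&` neg \top by rewrite nU.
  rewrite joinx1 nK meet0x => e.
  by rewrite -[\top]nK e.
by rewrite -[a]nK h nb.
Qed.

Lemma nI (neg : L -> L) (nK : forall x, neg (neg x) = x)
  (nU : forall x y, neg (x `|` y) = neg x `&` neg y) x y :
  neg (x `&` y) = neg x `|` neg y.
Proof. by rewrite -[x `&` y]nK -[x]nK -[y]nK -nU !nK. Qed.

Lemma n_anti (neg : L -> L) (nK : forall x, neg (neg x) = x)
  (nU : forall x y, neg (x `|` y) = neg x `&` neg y) x y :
  x <= y -> neg y <= neg x.
Proof. by move=> /join_idPr <-; rewrite nU leIl. Qed.
End H.

Theorem lemma3p2 (disp : Order.disp_t) (L : tbDistrLatticeType disp)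
  (neg star : L -> L) (hA : is_mpM neg star)
  (k : nat) (hk : (1 <= k)%N) (t : L -> L) (ht : is_Ck_aut neg star k t)
  (F : L -> Prop) :
  cyclic_ds neg star k t F <-> c_filter neg star t F.
Proof.
case: hA => nK nU pc ax.
case: ht => _ [_ _ tk].
have sm : forall x, x `&` star x = \bot by move=> x; apply/eqP; rewrite pc.
have axd : forall x, neg x `&` neg (star x) <= x.
  move=> x; have := n_anti nK nU (ax x); rewrite !nU nK => h.
  by apply: le_trans h _; rewrite leIr.
have nabE : forall x, nabla neg star x = x `|` neg (star x).
  by move=> x; rewrite /nabla (nI nK nU) nK.
have delE : forall x, delta neg star x = x `&` star (neg x).
  by move=> x; rewrite /delta /nabla !nK.
have L1 : forall z, nabla neg star (neg z) `|` z = \top.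
  move=> z; apply: (top_of_neg nK nU); rewrite nabE !nU !nK.
  apply/eqP; rewrite -lex0 -(sm (neg z)).
  by rewrite lexI leIr /= (le_trans (leIl _ _) (leIr _ _)).
have nD : forall z, neg (delta neg star z) = nabla neg star (neg z).
  by move=> z; rewrite /delta nK.
have C : forall w, (w `|` neg (star w)) `&` (neg w `&` star w) = \bot.
  move=> w; apply/eqP; rewrite -lex0 -(sm w) meetUl leUx; apply/andP; split.
    by rewrite lexI leIl /= (le_trans (leIr _ _) (leIr _ _)).
  rewrite lexI (le_trans (leIr _ _) (leIr _ _)) andbT.
  apply: le_trans (axd w); rewrite lexI leIl andbT.
  exact: le_trans (leIr _ _) (leIl _ _).
have L3 : forall z, delta neg star z `&` nabla neg star (neg z) = \bot.
  by move=> z; rewrite delE nabE meetC; have := C (neg z); rewrite !nK.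
have L2 : forall z, delta neg star z `|` nabla neg star (neg z) = \top.
  move=> z; apply: (top_of_neg nK nU); rewrite nU nD meetC; exact: L3.
have Jk : forall x, nabla neg star (neg x) <=
    \join_(1 <= i < k.+1) nabla neg star (neg (iter i t x)).
  move=> x; apply: (joins_min_seq (x:=k)) => //.
    by rewrite mem_index_iota hk ltnSn.
  by rewrite tk.
have J1 : forall x, nabla neg star (neg (t x)) <=
    \join_(1 <= i < k.+1) nabla neg star (neg (iter i t x)).
  move=> x; apply: (joins_min_seq (x:=1%N)) => //.
  by rewrite mem_index_iota leqnn ltnS.
split.
  case=> Dt MP.
  have up : forall x y, F x -> x <= y -> F y.
    move=> x y Fx le; apply: (MP x) => //.
    suff -> : cimp neg star k t x y = \top by [].
    by apply/eqP; rewrite -le1x -(L1 x) /cimp leU2 // Jk.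
  split; [split|..].
  - exact: Dt.
  - exact: up.
  - move=> x y Fx Fy; apply: (MP y) => //; rewrite /cimp joinIr.
    rewrite (_ : _ `|` y = \top) ?meetx1; first exact: up Fx (leUr _ _).
    by apply/eqP; rewrite -le1x -(L1 y) leU2 // Jk.
  - move=> x Fx; apply: (MP x) => //.
    rewrite (_ : cimp _ _ _ _ _ _ = \top) //.
    by apply/eqP; rewrite -le1x -(L2 x) /cimp joinC leU2 // Jk.
  - move=> x Fx; apply: (MP x) => //.
    rewrite (_ : cimp _ _ _ _ _ _ = \top) //.
    by apply/eqP; rewrite -le1x -(L1 (t x)) /cimp leU2 // J1.
case=> [[Ft up mI] Fd Ftt]; split => // x y Fx.
have Fit : forall i, F (iter i t x) by elim=> //= i IH; apply: Ftt.
have gen : forall n y, F (\join_(1 <= i < n.+1) nabla neg star (neg (iter i t x)) `|` y) -> F y.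
  elim=> [|n IH] y'.
    by rewrite big_geq // join0x.
  rewrite big_nat_recr //= -joinA => /IH H.
  have := mI _ _ (Fd _ (Fit n.+1)) H.
  rewrite meetUr L3 join0x => h; exact: up h (leIr _ _).
exact: gen k y.
Qed.
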